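(* Let $\tilde\tau\in(0,1/2)$ and $R=2^{[1-H(\tau')]N/2}$, where $\tau'=(\tau N-2)/(N-1)$. Let $\mathcal N_R$ be a neighborhood of radius $R$ centered at an arbitrary vertex, and let $A$ be the event that for every $v\in\mathcal N_R$, a $+1$ agent would be happy at the location of $v$ at time $0$. Then $P(A)\to1$ as $N\to\infty$.
   Context: Setting: $G_n$ is the $n\times n$ torus grid, $w$ is a positive integer, and $N=(2w+1)^2$. $\mathcal N(v)$ is the set of vertices within $\ell_\infty$ distance $w$ of $v$, and a neighborhood of radius $\rho$ is defined analogously. In the initial configuration (time $0$), each vertex holds an agent of type $\pm1$, independently with probability $1/2$ each. The intolerance is $\tau=\lceil\tilde\tau N\rceil/N$, and $H$ is the binary entropy function. ''A $+1$ agent would be happy at the location of $v$'' means: if the agent at $v$ were replaced by an agent of type $+1$, with all other agents unchanged, then at least a fraction $\tau$ of the agents in $\mathcal N(v)$ would be of type $+1$. *)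

(* Defs.v *)
From Stdlib Require Import Reals ZArith.
From mathcomp Require Import all_boot.

Set Implicit Arguments.
Unset Strict Implicit.
Unset Printing Implicit Defensive.

Definition vert (n : nat) : Type := ('I_n * 'I_n)%type.

Definition cdist (n : nat) (a b : 'I_n) : nat :=
  minn ((a + n - b) %% n) ((b + n - a) %% n).

Definition tdist (n : nat) (u v : vert n) : nat :=
  maxn (cdist u.1 v.1) (cdist u.2 v.2).

(* Configurations: true = agent of type +1, false = agent of type -1. *)
Definition config (n : nat) := {ffun vert n -> bool}.

Definition nbhd (n w : nat) (v : vert n) : {set vert n} :=
  [set u | (tdist u v <= w)%N].

Definition Nsize (w : nat) : nat := ((2 * w + 1) ^ 2)%N.

Local Open Scope R_scope.

Definition Rle_b (x y : R) : bool := if Rle_dec x y then true else false.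

Definition Rceil (x : R) : Z := (- Int_part (- x))%Z.

Definition tau (tt : R) (w : nat) : R :=
  IZR (Rceil (tt * INR (Nsize w))) / INR (Nsize w).

(* A +1 agent would be happy at the location of v: replacing the agent at v
   by a +1 agent, at least a fraction tau of the agents in N(v) are +1. *)
Definition happy_plus (n w : nat) (tt : R) (s : config n) (v : vert n) : bool :=
  Rle_b (tau tt w * INR #|nbhd w v|)
        (INR #|[set u in nbhd w v | (u == v) || s u]|).

(* Binary entropy (base 2). Note ln x = 0 for x <= 0 in Stdlib, so 0 log 0 = 0. *)
Definition log2 (x : R) : R := ln x / ln 2.
Definition Hbin (p : R) : R := - p * log2 p - (1 - p) * log2 (1 - p).

Definition tau' (tt : R) (w : nat) : R :=
  (tau tt w * INR (Nsize w) - 2) / (INR (Nsize w) - 1).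

Definition Rrad (tt : R) (w : nat) : R :=
  Rpower 2 ((1 - Hbin (tau' tt w)) * INR (Nsize w) / 2).

Definition eventA (n w : nat) (tt : R) (v0 : vert n) (s : config n) : bool :=
  [forall v : vert n, Rle_b (INR (tdist v v0)) (Rrad tt w) ==> happy_plus w tt s v].

(* Probability under the uniform (i.i.d. fair) initial configuration. *)
Definition probA (n w : nat) (tt : R) (v0 : vert n) : R :=
  INR #|[set s : config n | eventA w tt v0 s]| / INR #|{: config n}|.

(* Main.v *)
Require Import Defs.
From Stdlib Require Import Reals Lra Lia ZArith.
From mathcomp Require Import all_boot.
From Coquelicot Require Import Coquelicot.
From mathcomp Require Import zify.

Local Open Scope R_scope.

Lemma mono_from_deriv (f f' : R -> R) (x : R) :
  0 <= x -> (forall c, 0 <= c <= x -> derivable_pt_lim f c (f' c)) ->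
  (forall c, 0 <= c <= x -> 0 <= f' c) -> f 0 <= f x.
Proof.
intros Hx Hd Hp. destruct (Req_dec x 0) as [->|Hne]; [lra|].
destruct (MVT_cor2 f f' 0 x) as [c [Hc1 Hc2]]; [lra|exact Hd|].
assert (0 <= f' c) by (apply Hp; lra). nra.
Qed.

Lemma ln_lower (x : R) : 0 <= x -> 2 * x / (2 + x) <= ln (1 + x).
Proof.
intros Hx.
set f := fun t => ln (1 + t) - 2 * t / (2 + t).
set f' := fun t => / (1 + t) - 4 / ((2 + t) * (2 + t)).
assert (H := mono_from_deriv f f' x Hx).
assert (f 0 = 0). { unfold f. rewrite Rplus_0_r ln_1. unfold Rdiv. ring. }
enough (f 0 <= f x) by (unfold f in *; lra).
apply H.
- intros c Hc. apply is_derive_Reals. unfold f, f'.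
  auto_derive; [lra | field; lra].
- intros c Hc. unfold f'.
  assert (0 < 1 + c) by lra. assert (0 < 2 + c) by lra.
  replace (/ (1 + c) - 4 / ((2 + c) * (2 + c))) with (c * c / ((1 + c) * (2+c) * (2+c))) by (field; lra).
  apply Rdiv_le_0_compat; [nra|]. apply Rmult_lt_0_compat; nra.
Qed.

Lemma ln_upper (x : R) : 0 <= x -> ln (1 + x) <= x - x * x / 2 + x * x * x / 3.
Proof.
intros Hx.
set f := fun t => t - t * t / 2 + t * t * t / 3 - ln (1 + t).
set f' := fun t => t * t * t / (1 + t).
assert (H := mono_from_deriv f f' x Hx).
assert (f 0 = 0). { unfold f. rewrite Rplus_0_r ln_1. unfold Rdiv. ring. }
enough (f 0 <= f x) by (unfold f in *; lra).
apply H.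
- intros c Hc. apply is_derive_Reals. unfold f, f'.
  auto_derive; [lra | field; lra].
- intros c Hc. unfold f'. apply Rdiv_le_0_compat; [|lra].
  apply Rmult_le_pos; [nra|lra].
Qed.

Lemma ln_le_sub1 (x : R) : 0 < x -> ln x <= x - 1.
Proof. intros Hx. pose proof (exp_ineq1_le (ln x)). rewrite exp_ln in H; lra. Qed.

Definition lf (n : nat) : R := ln (INR n`!).
Definition bst (n : nat) : R := lf n + INR n - (INR n + /2) * ln (INR n).

Lemma INR_fact_pos n : 0 < INR n`!.
Proof. apply lt_0_INR. apply/ltP. exact: fact_gt0. Qed.

Lemma lfS n : lf n.+1 = ln (INR n.+1) + lf n.
Proof.
rewrite /lf factS -multE mult_INR ln_mult //. apply lt_0_INR; lia. exact: INR_fact_pos.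
Qed.

Lemma bst_step n : (1 <= n)%N ->
  bst n - bst n.+1 = (INR n + /2) * ln (1 + / INR n) - 1.
Proof.
move=> Hn. have Hp : 0 < INR n by apply lt_0_INR; lia.
have E : ln (INR n.+1) = ln (INR n) + ln (1 + / INR n).
  rewrite -ln_mult //; last by (have := Rinv_0_lt_compat _ Hp; lra).
  f_equal. rewrite S_INR. field. lra.
rewrite /bst lfS E S_INR. ring.
Qed.

Lemma bst_step_bounds n : (1 <= n)%N ->
  0 <= bst n - bst n.+1 <= / (2 * INR n) - / (2 * INR n.+1).
Proof.
move=> Hn. rewrite bst_step //. have Hp : 1 <= INR n by apply (le_INR 1); lia.
set x := / INR n.
have Hx0 : 0 < x by apply Rinv_0_lt_compat; lra.
have Hx1 : x <= 1 by rewrite /x -Rinv_1; apply Rinv_le_contravar; lra.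
have Hn' : INR n = / x by rewrite /x Rinv_inv.
have L := ln_lower x (Rlt_le _ _ Hx0). have U := ln_upper x (Rlt_le _ _ Hx0).
rewrite S_INR Hn'. split.
- apply Rle_trans with ((/ x + / 2) * (2 * x / (2 + x)) - 1).
  + right. field. lra.
  + have : 0 <= / x + / 2 by (have := Rinv_0_lt_compat _ Hx0; lra). nra.
- apply Rle_trans with ((/ x + / 2) * (x - x * x / 2 + x * x * x / 3) - 1).
  + have : 0 <= / x + / 2 by (have := Rinv_0_lt_compat _ Hx0; lra). nra.
  + have -> : (/ x + / 2) * (x - x * x / 2 + x * x * x / 3) - 1 = x * x / 12 + x * x * x / 6 by field; lra.
    have -> : / (2 * / x) - / (2 * (/ x + 1)) = x * x / (2 * (1 + x)) by field; lra.
    apply Rle_trans with (x * x / 4); first nra.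
    apply Rmult_le_compat_l; first nra.
    apply Rinv_le_contravar; lra.
Qed.

Lemma bst1 : bst 1 = 1.
Proof. rewrite /bst /lf /=. replace (INR 1) with 1 by reflexivity. rewrite ln_1. ring. Qed.

Lemma bst_bounds n : (1 <= n)%N -> / 2 <= bst n <= 1.
Proof.
move=> Hn.
suff : bst n <= 1 /\ / 2 + / (2 * INR n) <= bst n.
  move=> [H1 H2]; split=> //. have : 0 < / (2 * INR n).
    apply Rinv_0_lt_compat. have : 1 <= INR n by apply (le_INR 1); lia. lra.
  lra.
elim: n Hn => [//|n IH] Hn.
case: n IH Hn => [|n] IH Hn.
  rewrite bst1 /=. lra.
have [H1 H2] := IH isT. have := bst_step_bounds n.+1 isT. lra.
Qed.

Lemma binom_ln m k : (1 <= k)%N -> (k < m)%N ->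
  ln (INR 'C(m, k)) <= (INR m + /2) * ln (INR m) - (INR k + /2) * ln (INR k)
     - (INR (m - k) + /2) * ln (INR (m - k)).
Proof.
move=> Hk Hkm.
have Hb := bin_fact (ltnW Hkm).
have Hc : 0 < INR 'C(m, k) by apply lt_0_INR; apply/ltP; rewrite bin_gt0 ltnW.
have E : lf m = ln (INR 'C(m, k)) + lf k + lf (m - k).
  rewrite /lf -Hb -!multE !mult_INR !ln_mult //; try apply Rmult_lt_0_compat; try apply INR_fact_pos; try lra.
have B1 := bst_bounds m (leq_trans Hk (ltnW Hkm)).
have B2 := bst_bounds k Hk.
have B3 : (1 <= m - k)%N by rewrite subn_gt0.
have {B3} B3 := bst_bounds _ B3.
have Em : INR (m - k) = INR m - INR k by rewrite minus_INR //; apply/leP; exact: ltnW.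
move: B1 B2 B3; rewrite /bst. nra.
Qed.

Lemma binom_ratio m j tt : 0 < tt -> (j < m)%N -> INR j.+1 <= tt * INR m ->
  (1 - tt) * INR 'C(m, j) <= tt * INR 'C(m, j.+1).
Proof.
move=> Htt Hjm Hj.
have H := mul_bin_left m j.
have HR : INR j.+1 * INR 'C(m, j.+1) = INR (m - j) * INR 'C(m, j).
  by rewrite -!mult_INR !multE H.
have Emj : INR (m - j) = INR m - INR j by rewrite minus_INR //; apply/leP; exact: ltnW.
rewrite S_INR in Hj HR.
have Hpos : 0 < INR m - INR j.
  have : (INR j < INR m) by apply lt_INR; apply/ltP.
  lra.
rewrite Emj in HR.
have HC0 : 0 <= INR 'C(m, j) by apply pos_INR.
have HC1 : 0 <= INR 'C(m, j.+1) by apply pos_INR.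
apply (Rmult_le_reg_r (INR m - INR j)) => //.
have : (1 - tt) * (INR j + 1) <= tt * (INR m - INR j) by nra.
nra.
Qed.

Lemma binom_tail m k tt : 0 < tt < / 2 -> (k < m)%N -> INR k <= tt * INR m ->
  forall j, (j <= k)%N ->
  (1 - 2 * tt) * INR (\sum_(i < j.+1) 'C(m, i)) <= (1 - tt) * INR 'C(m, j).
Proof.
move=> Htt Hkm Hk. elim=> [|j IH] Hj.
  rewrite big_ord_recr big_ord0 /=. rewrite bin0 /=. lra.
rewrite big_ord_recr /=. set S := \sum_(i < j.+1) _. rewrite -plusE plus_INR.
have IH' := IH (ltnW Hj).
have Hr := binom_ratio m j tt (proj1 Htt) (leq_ltn_trans (ltnW Hj) Hkm).
have : INR j.+1 <= tt * INR m.
  apply Rle_trans with (INR k) => //. apply le_INR. by apply/leP.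
move=> /Hr {}Hr.
have := pos_INR 'C(m, j.+1). rewrite -/S in IH'. nra.
Qed.

Lemma ln_le' x y : 0 < x -> x <= y -> ln x <= ln y.
Proof. move=> Hx [H|->]; [left; apply ln_increasing => //|right=> //]. Qed.

Lemma ln_ge_1m x : 0 < x -> 1 - / x <= ln x.
Proof.
move=> Hx. have H := ln_le_sub1 (/ x) (Rinv_0_lt_compat _ Hx).
rewrite ln_Rinv // in H. lra.
Qed.

Lemma ln_div' x y : 0 < x -> 0 < y -> ln (x / y) = ln x - ln y.
Proof. move=> Hx Hy. rewrite /Rdiv ln_mult ?ln_Rinv //; try lra; exact: Rinv_0_lt_compat. Qed.

Section Ent.
Variables (M K L : R).
Hypothesis HK : 0 < K.
Hypothesis HL : 0 < L.
Hypothesis HM : M = K + L.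

Definition Ent := M * ln M - K * ln K - L * ln L.

Lemma Ent_ge0 : 0 <= Ent.
Proof.
rewrite /Ent. have H1 : ln K <= ln M by apply ln_le'; lra.
have H2 : ln L <= ln M by apply ln_le'; lra.
rewrite HM in H1 H2 *. nra.
Qed.

Lemma Ent_le : Ent <= M * ln 2.
Proof.
rewrite /Ent.
have H1 := ln_ge_1m (2 * K / M). have H2 := ln_ge_1m (2 * L / M).
have HM0 : 0 < M by lra.
rewrite !ln_div' ?ln_mult in H1 H2; try lra; try (apply Rmult_lt_0_compat; lra).
have E1 : / (2 * K / M) = M / (2 * K) by field; lra.
have E2 : / (2 * L / M) = M / (2 * L) by field; lra.
rewrite E1 in H1; rewrite E2 in H2.
have H1' : 0 < 2 * K / M by apply Rdiv_lt_0_compat; lra.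
have H2' : 0 < 2 * L / M by apply Rdiv_lt_0_compat; lra.
have {}H1 := H1 H1'. have {}H2 := H2 H2'.
have A1 : K * (1 - M / (2 * K)) = K - M / 2 by field; lra.
have A2 : L * (1 - M / (2 * L)) = L - M / 2 by field; lra.
have B1 := Rmult_le_compat_l K _ _ (Rlt_le _ _ HK) H1.
have B2 := Rmult_le_compat_l L _ _ (Rlt_le _ _ HL) H2.
rewrite A1 in B1. rewrite A2 in B2. rewrite HM in B1 B2 *. nra.
Qed.

Lemma Hbin_Ent : Hbin (K / M) * ln 2 = Ent / M.
Proof.
have HM0 : 0 < M by lra.
have E1 : 1 - K / M = L / M by rewrite HM; field; lra.
have Hl2 : 0 < ln 2 by have := ln_lt_2; lra.
rewrite /Hbin /log2 E1 !ln_div' // /Ent.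
have -> : ln M = ln (K + L) by rewrite HM.
rewrite HM. field. lra.
Qed.
End Ent.

Lemma exp_le' x y : x <= y -> exp x <= exp y.
Proof. move=> [H|->]; [left; exact: exp_increasing | right=> //]. Qed.

Lemma analytic m k tt : 0 < tt < / 2 -> (1 <= k)%N -> (k < m)%N -> INR k <= tt * INR m ->
  (2 * Rpower 2 ((1 - Hbin (INR k / INR m)) * INR m.+1 / 2) + 3) ^ 2
    * INR (\sum_(j < k.+1) 'C(m, j)) / 2 ^ m
  <= 34 * (1 - tt) / (1 - 2 * tt) * sqrt (2 / INR k).
Proof.
move=> Htt Hk Hkm HkM.
set M := INR m. set K := INR k. set L := INR (m - k).
change (K <= tt * M) in HkM.
have HK : 0 < K by apply lt_0_INR; lia.
have HL : 0 < L by apply lt_0_INR; lia.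
have HM : M = K + L by rewrite /L minus_INR; [rewrite /M /K; ring | apply/leP; exact: ltnW].
have HM0 : 0 < M by lra.
have Hl2 : 0 < ln 2 by have := ln_lt_2; lra.
set E := Ent M K L.
have HE0 := Ent_ge0 M K L HK HL HM. have HE1 := Ent_le M K L HK HL HM.
have HH := Hbin_Ent M K L HK HL HM. rewrite -/E in HE0 HE1 HH.
set C := INR 'C(m, k).
have HC0 : 0 < C by apply lt_0_INR; apply/ltP; rewrite bin_gt0 ltnW.
set X := M / (K * L).
have HX0 : 0 < X by apply Rdiv_lt_0_compat; [lra | apply Rmult_lt_0_compat; lra].
have HC : C <= exp E * sqrt X.
  rewrite -(exp_ln C) // -Rpower_sqrt // /Rpower -exp_plus.
  apply exp_le'. have := binom_ln m k Hk Hkm. rewrite -/M -/K -/L -/C.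
  rewrite /X ln_div' ?ln_mult //; try (apply Rmult_lt_0_compat; lra).
  rewrite /E /Ent. lra.
set S := INR (\sum_(j < k.+1) 'C(m, j)).
have HS : (1 - 2 * tt) * S <= (1 - tt) * C := binom_tail m k tt Htt Hkm HkM k (leqnn k).
have HS0 : 0 <= S by apply pos_INR.
have -> : 2 ^ m = exp (M * ln 2) by rewrite -Rpower_pow; [rewrite /Rpower /M // | lra].
rewrite /Rpower S_INR -/M.
set a := (1 - Hbin (K / M)) * (M + 1) / 2 * ln 2.
set Rr := exp a.
have HRr0 : 0 < Rr by apply exp_pos.
have Hr2 : Rr * Rr * exp E / exp (M * ln 2) <= 2.
  rewrite /Rr /Rdiv -!exp_plus -exp_Ropp -exp_plus.
  rewrite -[X in _ <= X](exp_ln 2); last lra. apply exp_le'.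
  have -> : a + a + E + - (M * ln 2) = ln 2 - Hbin (K / M) * ln 2.
    have HE : E = Hbin (K / M) * ln 2 * M by rewrite HH; field; lra.
    rewrite /a HE. field.
  rewrite HH. have : 0 <= E / M by apply Rdiv_le_0_compat; lra. lra.
have Hq : exp E / exp (M * ln 2) <= 1.
  rewrite /Rdiv -exp_Ropp -exp_plus -exp_0. apply exp_le'. lra.
have HsX : sqrt X <= sqrt (2 / K).
  apply sqrt_le_1_alt. rewrite /X. apply Rmult_le_reg_r with (K * L); [nra|].
  rewrite /Rdiv Rmult_assoc Rinv_l; [|nra]. field_simplify; [|lra]. have : tt * M <= M / 2 by nra. lra.
have HsX0 : 0 <= sqrt X by apply sqrt_pos.
set P := exp (M * ln 2). have HP : 0 < P by apply exp_pos.
set c := (1 - tt) / (1 - 2 * tt).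
have Hc : 0 < 1 - 2 * tt by lra.
have HSc : S <= c * (exp E * sqrt X).
  rewrite /c. apply Rmult_le_reg_l with (1 - 2 * tt) => //.
  have -> : (1 - 2 * tt) * ((1 - tt) / (1 - 2 * tt) * (exp E * sqrt X)) = (1 - tt) * (exp E * sqrt X) by field; lra.
  have : 0 <= 1 - tt by lra. nra.
have Hc0 : 0 <= c by rewrite /c; apply Rdiv_le_0_compat; lra.
have Hsq : (2 * Rr + 3) ^ 2 <= 8 * (Rr * Rr) + 18.
  have := pow2_ge_0 (2 * Rr - 3). simpl. nra.
have HeP : 0 <= exp E / P by apply Rdiv_le_0_compat; [apply Rlt_le, exp_pos | lra].
apply Rle_trans with ((8 * (Rr * Rr) + 18) * (c * (exp E * sqrt X)) / P).
  rewrite /Rdiv. apply Rmult_le_compat_r; [left; apply Rinv_0_lt_compat => // |].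
  apply Rmult_le_compat => //; nra.
have -> : (8 * (Rr * Rr) + 18) * (c * (exp E * sqrt X)) / P
   = c * sqrt X * (8 * (Rr * Rr * exp E / P) + 18 * (exp E / P)) by field; lra.
rewrite -/P in Hr2 Hq.
have H34 : 8 * (Rr * Rr * exp E / P) + 18 * (exp E / P) <= 34 by lra.
apply Rle_trans with (c * sqrt X * 34).
  apply Rmult_le_compat_l => //. nra.
have -> : 34 * (1 - tt) / (1 - 2 * tt) = 34 * c by rewrite /c; field; lra.
nra.
Qed.

Local Close Scope R_scope.

Lemma cdist_le n (a b : 'I_n) r :
  (cdist b a <= r)%N = (((b + n - a) %% n) <= r)%N || (n <= (b + n - a) %% n + r)%N.
Proof.
rewrite /cdist. have Ha := ltn_ord a. have Hb := ltn_ord b.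
case: (leqP a b) => Hab.
- have -> : (b + n - a = (b - a) + n)%N by lia.
  rewrite modnDr modn_small; last by lia.
  case: (eqVneq (a : nat) b) => Heq.
  + have -> : (a + n - b = n)%N by lia. rewrite modnn. lia.
  + have -> : (a + n - b = n - (b - a))%N by lia.
    rewrite modn_small; last by lia. lia.
- have -> : (a + n - b = (a - b) + n)%N by lia.
  rewrite modnDr (modn_small (m := (a - b)%N)); last by lia.
  rewrite modn_small; last by lia. lia.
Qed.

Lemma count_ord_set n (p : nat -> bool) :
  #|[set x : 'I_n | p x]| = (\sum_(0 <= i < n) (if p i then 1 else 0))%N.
Proof.
rewrite -sum1_card big_mkcond /= big_mkord. apply: eq_bigr => i _. by rewrite inE.
Qed.

Lemma sum_ind_const a b (p : nat -> bool) c :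
  (forall i, (a <= i < b)%N -> p i = c) ->
  (\sum_(a <= i < b) (if p i then 1 else 0) = (if c then b - a else 0))%N.
Proof.
move=> H. rewrite (@eq_big_nat _ _ _ a b _ (fun _ => if c then 1 else 0)%N); last first.
  by move=> i /H ->.
rewrite sum_nat_const_nat. clear H. case: c => /=; lia.
Qed.

Lemma card_window n r : (2 * r + 1 <= n)%N ->
  #|[set x : 'I_n | (x <= r)%N || (n <= x + r)%N]| = (2 * r + 1)%N.
Proof.
move=> Hn. rewrite (count_ord_set n (fun x => (x <= r)%N || (n <= x + r)%N)).
rewrite (@big_cat_nat _ _ _ r.+1) /=; [|lia|lia].
rewrite (@big_cat_nat _ _ _ (n - r) r.+1 n) /=; [|lia|lia].
rewrite (@sum_ind_const 0 r.+1 _ true); last by move=> i /andP[_ H]; apply/orP; left; lia.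
rewrite (@sum_ind_const r.+1 (n - r) _ false); last first.
  move=> i /andP[H1 H2]. apply/negbTE. rewrite negb_or -!ltnNge. apply/andP; split; lia.
rewrite (@sum_ind_const (n - r) n _ true); last first.
  move=> i /andP[H1 H2]. apply/orP; right; lia.
lia.
Qed.

Definition ball n (a : 'I_n) r : {set 'I_n} := [set b : 'I_n | (cdist b a <= r)%N].
Arguments ball {n}.

Lemma card_ball n (a : 'I_n) r :
  (#|ball a r| <= 2 * r + 1)%N /\ ((2 * r + 1 <= n)%N -> #|ball a r| = (2 * r + 1)%N).
Proof.
have Hn : (0 < n)%N by have := ltn_ord a; lia.
pose rot (b : 'I_n) : 'I_n := Ordinal (ltn_pmod (b + n - a) Hn).
have Hrot : injective rot.
  move=> b c /(congr1 val) /= H. apply: val_inj => /=.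
  have Ha := ltn_ord a. have Hb := ltn_ord b. have Hc := ltn_ord c.
  have Hb' : (b + n - a = b + (n - a))%N by lia.
  have Hc' : (c + n - a = c + (n - a))%N by lia.
  move: H. rewrite Hb' Hc'. move/eqP. rewrite eqn_modDr. move/eqP.
  by rewrite !modn_small.
have E : ball a r = rot @^-1: [set x : 'I_n | (x <= r)%N || (n <= x + r)%N].
  apply/setP=> b. by rewrite !inE cdist_le.
have Hex : (2 * r + 1 <= n)%N -> #|ball a r| = (2 * r + 1)%N.
  by move=> H; rewrite E card_preimset // card_window.
split=> //. case: (leqP (2 * r + 1) n) => H.
  by rewrite Hex.
apply: leq_trans (ltnW H). rewrite -[X in _ <= X](card_ord n). exact: max_card.
Qed.

Lemma tdist_le n (u v : vert n) r :
  (tdist u v <= r)%N = (u.1 \in ball v.1 r) && (u.2 \in ball v.2 r).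
Proof. by rewrite /tdist !inE geq_max. Qed.

Lemma nbhd_card n w (v : vert n) : (2 * w + 1 <= n)%N -> #|nbhd w v| = Nsize w.
Proof.
move=> Hn.
have -> : nbhd w v = setX (ball v.1 w) (ball v.2 w).
  apply/setP => -[x y]. by rewrite /nbhd in_set tdist_le in_setX.
have [_ E1] := card_ball _ v.1 w. have [_ E2] := card_ball _ v.2 w.
rewrite cardsX E1 // E2 //.
Qed.

Lemma dist_card n r (v0 : vert n) :
  (#|[set v : vert n | (tdist v v0 <= r)%N]| <= (2 * r + 1) * (2 * r + 1))%N.
Proof.
apply: leq_trans (_ : #|setX (ball v0.1 r) (ball v0.2 r)| <= _)%N.
  apply: subset_leq_card. apply/subsetP => -[x y]. by rewrite in_set tdist_le in_setX.
rewrite cardsX. apply: leq_mul; [exact: (proj1 (card_ball _ v0.1 r)) | exact: (proj1 (card_ball _ v0.2 r))].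
Qed.

Lemma card_subsets_le (T : finType) (S : {set T}) k :
  (#|[set B : {set T} | (B \subset S) && (#|B| <= k)%N]| <= \sum_(j < k.+1) 'C(#|S|, j))%N.
Proof.
elim: k => [|k IH].
  rewrite big_ord_recr big_ord0 /= -(cards_draws S 0). apply: subset_leq_card.
  apply/subsetP => B. rewrite !inE => /andP[-> H]. by rewrite leqn0 in H.
rewrite big_ord_recr /=.
apply: leq_trans (_ : #|[set B : {set T} | (B \subset S) && (#|B| <= k)%N] :|:
                  [set B : {set T} | (B \subset S) & #|B| == k.+1]| <= _)%N.
  apply: subset_leq_card. apply/subsetP => B. rewrite !inE => /andP[-> H] /=.
  by rewrite leq_eqVlt ltnS orbC in H.
apply: leq_trans (leq_card_setU _ _) _. rewrite cards_draws. by rewrite leq_add2r.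
Qed.

Lemma config_count n (S : {set vert n}) k :
  (#|[set s : config n | (#|[set u in S | s u]| <= k)%N]| <=
     (\sum_(j < k.+1) 'C(#|S|, j)) * 2 ^ #|~: S|)%N.
Proof.
pose f (s : config n) := ([set u in S | s u], [set u in ~: S | s u]).
have Hf : injective f.
  move=> s1 s2 [] /setP H1 /setP H2. apply/ffunP => u.
  case: (boolP (u \in S)) => Hu.
  - by move: (H1 u); rewrite !inE Hu.
  - have Hu' : u \in ~: S by rewrite inE.
    by move: (H2 u); rewrite !inE Hu.
set A := [set s : config n | _].
rewrite -(card_imset _ Hf).
apply: leq_trans (_ : #|setX [set B : {set vert n} | (B \subset S) && (#|B| <= k)%N] (powerset (~: S))| <= _)%N.
  apply: subset_leq_card. apply/subsetP => p /imsetP [s Hs ->].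
  rewrite !inE in Hs *. apply/andP; split.
  - apply/andP; split => //. apply/subsetP => u. by rewrite inE => /andP[].
  - apply/subsetP => u. by rewrite inE => /andP[].
rewrite !cardsX card_powerset. apply: leq_mul => //. exact: card_subsets_le.
Qed.

Lemma card_bigcup_le (I T : finType) (P : pred I) (F : I -> {set T}) :
  (#|\bigcup_(i | P i) F i| <= \sum_(i | P i) #|F i|)%N.
Proof.
apply: (big_ind2 (fun (X : {set T}) (a : nat) => #|X| <= a)%N).
- by rewrite cards0.
- move=> X a Y b H1 H2. apply: leq_trans (leq_card_setU X Y) _. exact: leq_add.
- by [].
Qed.

Lemma notA_count n w tt (v0 : vert n) k :
  (2 * w + 1 <= n)%N ->
  (forall (v : vert n) (s : config n), ~~ happy_plus w tt s v -> (#|[set u in nbhd w v :\ v | s u]| <= k)%N) ->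
  (#|[set s : config n | ~~ eventA w tt v0 s]| <=
   #|[set v : vert n | Rle_b (INR (tdist v v0)) (Rrad tt w)]| *
     ((\sum_(j < k.+1) 'C((Nsize w).-1, j)) * 2 ^ (n * n - (Nsize w).-1)))%N.
Proof.
move=> Hn Hh.
set VR := [set v : vert n | _].
apply: leq_trans (_ : #|\bigcup_(v in VR) [set s : config n | ~~ happy_plus w tt s v]| <= _)%N.
  apply: subset_leq_card. apply/subsetP => s. rewrite inE => /forallPn [v].
  rewrite negb_imply => /andP [H1 H2]. apply/bigcupP. exists v; first by rewrite inE.
  by rewrite inE.
apply: leq_trans (@card_bigcup_le _ _ (fun v => v \in VR) (fun v => [set s : config n | ~~ happy_plus w tt s v])) _.
rewrite -sum_nat_const. apply: leq_sum => v _.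
set S := nbhd w v :\ v.
have HS : #|S| = (Nsize w).-1.
  have := cardsD1 v (nbhd w v). rewrite nbhd_card // inE.
  have -> : (tdist v v <= w)%N.
    rewrite tdist_le !inE /cdist !addKn.
    by rewrite !modnn minnn.
  move=> ->. by rewrite /=.
have HCS : #|~: S| = (n * n - (Nsize w).-1)%N.
  by rewrite cardsCs setCK card_prod card_ord HS.
apply: leq_trans (_ : #|[set s : config n | (#|[set u in S | s u]| <= k)%N]| <= _)%N.
  apply: subset_leq_card. apply/subsetP => s. rewrite !inE. exact: Hh.
rewrite -HCS -HS. exact: config_count.
Qed.

Local Open Scope R_scope.

Lemma Rceil_bounds x : x <= IZR (Rceil x) < x + 1.
Proof.
rewrite /Rceil opp_IZR. have [H1 H2] := base_Int_part (- x). lra.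
Qed.

Lemma Nsize_pos w : (0 < Nsize w)%N.
Proof. rewrite /Nsize expn_gt0. apply/orP; left. lia. Qed.

Lemma tau_N tt w : tau tt w * INR (Nsize w) = IZR (Rceil (tt * INR (Nsize w))).
Proof.
rewrite /tau. field. apply not_0_INR. have := Nsize_pos w. lia.
Qed.

Lemma IZR_to_nat z : (0 <= z)%Z -> IZR z = INR (Z.to_nat z).
Proof. move=> H. by rewrite INR_IZR_INZ Z2Nat.id. Qed.

Lemma unhappy n w tt (v : vert n) (s : config n) : (2 * w + 1 <= n)%N ->
  ~~ happy_plus w tt s v ->
  INR (#|[set u in nbhd w v :\ v | s u]|.+1) < IZR (Rceil (tt * INR (Nsize w))).
Proof.
move=> Hn. rewrite /happy_plus /Rle_b. case: Rle_dec => // H _.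
apply Rnot_le_lt in H. rewrite nbhd_card // tau_N in H.
apply: Rle_lt_trans H. right. f_equal. f_equal.
have Hv : v \in nbhd w v.
  rewrite inE tdist_le !inE /cdist !addKn. by rewrite !modnn minnn.
have -> : [set u in nbhd w v | (u == v) || s u] = v |: [set u in nbhd w v :\ v | s u].
  apply/setP => u. rewrite !inE.
  case: (eqVneq u v) => [->|Huv] //=. by move: Hv; rewrite inE => ->.
rewrite cardsU1 (_ : v \notin _); last by rewrite !inE eqxx.
by [].
Qed.

Lemma VR_card n w tt (v0 : vert n) :
  INR #|[set v : vert n | Rle_b (INR (tdist v v0)) (Rrad tt w)]| <= (2 * Rrad tt w + 3) ^ 2.
Proof.
set R0 := Rrad tt w.
have HR : 0 < R0 by rewrite /R0 /Rrad /Rpower; apply exp_pos.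
have [Hu1 Hu2] := archimed R0.
have Hup : (0 <= up R0)%Z by apply le_IZR; lra.
set r := Z.to_nat (up R0).
have Hr : INR r = IZR (up R0) by rewrite /r -IZR_to_nat.
apply Rle_trans with (INR ((2 * r + 1) * (2 * r + 1))%N).
  apply le_INR. apply/leP. apply: (leq_trans _ (dist_card _ r v0)).
  apply: subset_leq_card. apply/subsetP => v. rewrite !inE /Rle_b.
  case: Rle_dec => // H _.
  have : IZR (Z.of_nat (tdist v v0)) < IZR (up R0) by rewrite -INR_IZR_INZ; lra.
  move/lt_IZR. rewrite /r. lia.
rewrite !mult_INR !plus_INR Hr /=.
have : 0 <= IZR (up R0) by lra.
nra.
Qed.

Lemma card_config n : #|{: config n}| = (2 ^ (n * n))%N.
Proof. by rewrite card_ffun card_bool card_prod card_ord. Qed.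

Lemma probA_eq n w tt (v0 : vert n) :
  1 - probA w tt v0 = INR #|[set s : config n | ~~ eventA w tt v0 s]| / INR (2 ^ (n * n))%N.
Proof.
have H := cardsC [set s : config n | eventA w tt v0 s].
rewrite card_config in H.
have E : ~: [set s : config n | eventA w tt v0 s] = [set s | ~~ eventA w tt v0 s].
  by apply/setP => s; rewrite !inE.
rewrite E in H.
have HD : INR (2 ^ (n * n))%N <> 0 by apply not_0_INR; apply/eqP; rewrite expn_eq0.
have HA : INR #|[set s : config n | eventA w tt v0 s]| =
   INR (2 ^ (n * n))%N - INR #|[set s : config n | ~~ eventA w tt v0 s]|.
  rewrite -H -plusE plus_INR. by rewrite /Rminus Rplus_assoc Rplus_opp_r Rplus_0_r.
rewrite /probA card_config HA. field. exact HD.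
Qed.

Lemma INR_expn x m : INR (x ^ m)%N = INR x ^ m.
Proof.
elim: m => [|m IH]; first by rewrite expn0.
by rewrite expnS -multE mult_INR IH.
Qed.

Theorem lemmaA4 :
  forall tt : R, 0 < tt < 1 / 2 ->
  forall eps : R, 0 < eps ->
  exists W : nat, forall w n : nat, leq W w -> leq (2 * w + 1)%N n ->
  forall v0 : vert n, 1 - eps <= @probA n w tt v0.
Proof.
move=> tt Htt eps Heps.
have Htt' : 0 < tt < / 2 by lra.
set c := 34 * (1 - tt) / (1 - 2 * tt).
have Hc : 0 < c by rewrite /c; apply Rdiv_lt_0_compat; lra.
set K0 := 2 * (c * c) / (eps * eps) + 1.
have HK0 : 1 <= K0.
  have : 0 <= 2 * (c * c) / (eps * eps) by apply Rdiv_le_0_compat; nra.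
  rewrite /K0. lra.
set x0 := (K0 + 3) / tt.
have Hx0 : 0 < x0 by rewrite /x0; apply Rdiv_lt_0_compat; lra.
have [Hu1 Hu2] := archimed x0.
have Hup : (0 <= up x0)%Z by apply le_IZR; lra.
exists (Z.to_nat (up x0)).
move=> w n HW Hn v0.
have HwR : x0 <= INR w.
  apply Rle_trans with (INR (Z.to_nat (up x0))).
    rewrite -IZR_to_nat //. lra.
  apply le_INR. by apply/leP.
set N := Nsize w.
have HNw : (w <= N)%N by rewrite /N /Nsize expnS expn1; nia.
have HN1 : (1 <= N)%N by exact: Nsize_pos.
set NR := INR N.
have HNR : x0 <= NR by apply Rle_trans with (INR w) => //; apply le_INR; apply/leP.
set T := Rceil (tt * NR).
have [HT1 HT2] := Rceil_bounds (tt * NR). rewrite -/T in HT1 HT2.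
have HttN : K0 + 3 <= tt * NR.
  have -> : K0 + 3 = tt * x0 by rewrite /x0; field; lra.
  apply Rmult_le_compat_l; lra.
have HT0 : (0 <= T)%Z by apply le_IZR; lra.
set Tn := Z.to_nat T.
have HTn : IZR T = INR Tn by rewrite /Tn -IZR_to_nat.
have HTn3 : (3 <= Tn)%N.
  apply/leP. apply INR_le. rewrite -HTn. simpl. lra.
set k := (Tn - 2)%N.
have Hk : INR k = INR Tn - 2 by rewrite /k minus_INR; [simpl; ring | apply/leP; lia].
set m := N.-1.
have Hm : INR m = NR - 1 by rewrite /m /NR -(prednK HN1) S_INR /=; ring.
have HmS : m.+1 = N by rewrite /m prednK.
have HkK0 : K0 <= INR k by lra.
have Hk1 : (1 <= k)%N by apply/leP; apply (INR_le 1); simpl; lra.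
have HkM : INR k <= tt * INR m.
  rewrite Hk Hm -HTn. have : tt <= 1 by lra. nra.
have Hkm : (k < m)%N.
  apply/ltP. apply INR_lt. have : 0 < INR k by apply lt_0_INR; lia. nra.
have Hh : forall (v : vert n) (s : config n), ~~ happy_plus w tt s v ->
    (#|[set u in nbhd w v :\ v | s u]| <= k)%N.
  move=> v s Hs. have := unhappy _ _ _ v s Hn Hs. rewrite -/N -/NR -/T HTn => H.
  have := INR_lt _ _ H. move/ltP. rewrite /k. lia.
have HnA := notA_count n w tt v0 k Hn Hh. rewrite -/N -/m in HnA.
set Sg := (\sum_(j < k.+1) 'C(m, j))%N.
set VR := [set v : vert n | Rle_b (INR (tdist v v0)) (Rrad tt w)].
have HmN : (m <= n * n)%N.
  have : (N <= n * n)%N by rewrite /N /Nsize expnS expn1; apply: leq_mul.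
  lia.
have Hpow : (2 ^ (n * n) = 2 ^ (n * n - m) * 2 ^ m)%N by rewrite -expnD subnK.
have Hp0 : 0 < INR (2 ^ (n * n - m))%N by apply lt_0_INR; apply/ltP; rewrite expn_gt0.
have Hpm : 0 < 2 ^ m by apply pow_lt; lra.
have Hbound : 1 - probA w tt v0 <= INR #|VR| * INR Sg / 2 ^ m.
  rewrite probA_eq Hpow.
  apply Rle_trans with (INR (#|VR| * (Sg * 2 ^ (n * n - m)))%N / INR (2 ^ (n * n - m) * 2 ^ m)%N).
    rewrite /Rdiv. apply Rmult_le_compat_r.
      left. apply Rinv_0_lt_compat. rewrite -multE mult_INR. apply Rmult_lt_0_compat => //.
      rewrite INR_expn. apply pow_lt. simpl. lra.
    apply le_INR. by apply/leP.
  rewrite -!multE !mult_INR !INR_expn. change (INR 2) with 2. right. field. split; apply pow_nonzero; lra.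
have HRr : Rrad tt w = Rpower 2 ((1 - Hbin (INR k / INR m)) * INR m.+1 / 2).
  rewrite /Rrad /tau' tau_N -/N -/NR -/T HTn HmS -/NR.
  do 3 f_equal. rewrite Hk Hm. by [].
have HVR := VR_card n w tt v0. rewrite -/VR HRr in HVR.
have HA := analytic m k tt Htt' Hk1 Hkm HkM.
have HSg0 : 0 <= INR Sg / 2 ^ m by apply Rdiv_le_0_compat; [apply pos_INR | lra].
have H1 : 1 - probA w tt v0 <= c * sqrt (2 / INR k).
  rewrite -/Sg in HA.
  have H1a : INR #|VR| * INR Sg / 2 ^ m <=
     (2 * Rpower 2 ((1 - Hbin (INR k / INR m)) * INR m.+1 / 2) + 3) ^ 2 * INR Sg / 2 ^ m.
    rewrite /Rdiv. apply Rmult_le_compat_r; [left; apply Rinv_0_lt_compat; lra|].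
    apply Rmult_le_compat_r; [apply pos_INR|exact HVR].
  rewrite /c. lra.
have H2 : c * sqrt (2 / INR k) <= eps.
  have Hs : sqrt (2 / INR k) <= sqrt ((eps / c) * (eps / c)).
    apply sqrt_le_1_alt.
    apply Rle_trans with (2 / K0).
      apply Rmult_le_compat_l; [lra|]. apply Rinv_le_contravar; lra.
    apply Rle_trans with (2 / (2 * (c * c) / (eps * eps))).
      apply Rmult_le_compat_l; [lra|]. apply Rinv_le_contravar; [|rewrite /K0; lra].
      apply Rdiv_lt_0_compat; nra.
    right. field. split; lra.
  rewrite sqrt_square in Hs; last by apply Rdiv_le_0_compat; lra.
  apply Rle_trans with (c * (eps / c)); [apply Rmult_le_compat_l; lra|].
  right. field. lra.
lra.
Qed.
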